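(* Let $s_1,\dots,s_n>0$, $S=\sum_{j=1}^n s_j$, $s_0>0$, and $I_1=\{j\in[n]: s_j>s_0\}$. Let $k\ge1$ and draw indices $\pi(1),\dots,\pi(k)\in[n]$ i.i.d., each equal to $j$ with probability $p_j=s_j/S$; assign to the $i$-th draw the weight $w_i=\frac{1}{k\,p_{\pi(i)}}$. Then with probability at least $1-\frac1k$, $$\sum_{i\in[k]:\,\pi(i)\in I_1}w_i\le\frac{2S}{s_0}.$$ *)

(* Defs.v *)
(* discrete probability over the finite sample space of
   index sequences pi : 'I_k -> 'I_n, with the i.i.d. product law. *)
From HB Require Import structures.
From mathcomp Require Import all_boot all_order all_algebra.
Set Implicit Arguments. Unset Strict Implicit. Unset Printing Implicit Defensive.
Import Order.TTheory GRing.Theory Num.Theory.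
Local Open Scope ring_scope.

Section Sampling.
Variables (R : realFieldType) (n : nat) (s : 'I_n -> R).

Definition Stot : R := \sum_(j < n) s j.

Definition pr (j : 'I_n) : R := s j / Stot.

Definition seq_prob (k : nat) (pi : {ffun 'I_k -> 'I_n}) : R :=
  \prod_(i < k) pr (pi i).

Definition Prob (k : nat) (E : pred {ffun 'I_k -> 'I_n}) : R :=
  \sum_(pi | E pi) seq_prob pi.

Definition wt (k : nat) (pi : {ffun 'I_k -> 'I_n}) (i : 'I_k) : R :=
  1 / (k%:R * pr (pi i)).

Definition I1 (s0 : R) : pred 'I_n := fun j => s0 < s j.

End Sampling.

(* Main.v *)
Require Import Defs.
From HB Require Import structures.
From mathcomp Require Import all_boot all_order all_algebra.
From mathcomp Require Import ring lra.
Import Order.TTheory GRing.Theory Num.Theory.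
Local Open Scope ring_scope.

Section Helpers.
Variables (R : realFieldType) (n k : nat) (s : 'I_n -> R).
Hypothesis hs : forall j, 0 < s j.
Hypothesis hn : (0 < n)%N.

Lemma Stot_gt0 : 0 < Stot s.
Proof.
rewrite /Stot (bigD1 (Ordinal hn)) //=.
apply: (lt_le_trans (hs (Ordinal hn))); rewrite lerDl.
by apply: sumr_ge0 => j _; exact: ltW.
Qed.

Lemma sum_pr : \sum_j pr s j = 1.
Proof. by rewrite /pr -mulr_suml divff // gt_eqF // Stot_gt0. Qed.

Lemma pr_gt0 j : 0 < pr s j.
Proof. by rewrite /pr divr_gt0 // Stot_gt0. Qed.

Lemma prodsum (H : 'I_k -> 'I_n -> R) :
  \sum_(pi : {ffun 'I_k -> 'I_n}) seq_prob s pi * \prod_i H i (pi i)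
  = \prod_i \sum_j pr s j * H i j.
Proof.
rewrite bigA_distr_bigA /=; apply: eq_bigr => pi _.
by rewrite /seq_prob -big_split.
Qed.

Lemma prod1 (x : 'I_k -> R) a : \prod_i (if i == a then x i else 1) = x a.
Proof. by rewrite -big_mkcond big_pred1_eq. Qed.

Lemma E1 (g : 'I_n -> R) a :
  \sum_(pi : {ffun 'I_k -> 'I_n}) seq_prob s pi * g (pi a) = \sum_j pr s j * g j.
Proof.
transitivity (\sum_(pi : {ffun 'I_k -> 'I_n}) seq_prob s pi *
   \prod_i (fun i j => if i == a then g j else 1) i (pi i)).
  by apply: eq_bigr => pi _; rewrite /= prod1.
rewrite (prodsum (fun i j => if i == a then g j else 1)) (bigD1 a) //= eqxx [X in _ * X]big1 ?mulr1 // => i /negbTE ->.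
under eq_bigr do rewrite mulr1; exact: sum_pr.
Qed.

Lemma E2 (g : 'I_n -> R) a b : a != b ->
  \sum_(pi : {ffun 'I_k -> 'I_n}) seq_prob s pi * (g (pi a) * g (pi b))
  = (\sum_j pr s j * g j) ^+ 2.
Proof.
move=> ab.
have ba : b != a by rewrite eq_sym.
transitivity (\sum_(pi : {ffun 'I_k -> 'I_n}) seq_prob s pi *
   \prod_i (fun i j => if i == a then g j else if i == b then g j else 1) i (pi i)).
  apply: eq_bigr => pi _; congr (_ * _) => /=.
  rewrite (bigD1 a) //= eqxx (bigD1 b) /= ?ba // (negbTE ba) eqxx big1 ?mulr1 //.
  by move=> i /andP[/negbTE -> /negbTE ->].
rewrite (prodsum (fun i j => if i == a then g j else if i == b then g j else 1)) (bigD1 a) //= (bigD1 b) /= ?ba //.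
rewrite eqxx (negbTE ba) eqxx [X in _ * (_ * X)]big1 ?mulr1 ?expr2 //.
move=> i /andP[/negbTE -> /negbTE ->]; under eq_bigr do rewrite mulr1; exact: sum_pr.
Qed.

Lemma var (g : 'I_n -> R) : \sum_j pr s j * g j = 0 ->
  \sum_(pi : {ffun 'I_k -> 'I_n}) seq_prob s pi * (\sum_i g (pi i)) ^+ 2
  = k%:R * \sum_j pr s j * g j ^+ 2.
Proof.
move=> g0.
transitivity (\sum_(pi : {ffun 'I_k -> 'I_n}) \sum_i \sum_i'
    seq_prob s pi * (g (pi i) * g (pi i'))).
  apply: eq_bigr => pi _; rewrite expr2 mulr_suml mulr_sumr.
  by apply: eq_bigr => i _; rewrite mulr_sumr mulr_sumr.
rewrite exchange_big /=.
have -> : k%:R * \sum_j pr s j * g j ^+ 2 = \sum_(i < k) \sum_j pr s j * g j ^+ 2.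
  by rewrite sumr_const card_ord mulr_natl.
apply: eq_bigr => i _; rewrite exchange_big /= (bigD1 i) //= [X in _ + X]big1 ?addr0.
  by under eq_bigr do rewrite -expr2; rewrite (E1 (fun j => g j ^+ 2)).
by move=> i' /negbTE; rewrite eq_sym => /negbT/E2 ->; rewrite g0 expr0n.
Qed.

End Helpers.

Theorem lemma14 (R : realFieldType) (n : nat) (s : 'I_n -> R) (s0 : R) (k : nat)
  (hn : (0 < n)%N) (hs : forall j, 0 < s j) (hs0 : 0 < s0) (hk : (1 <= k)%N) :
  1 - 1 / k%:R <=
  Prob s (fun pi : {ffun 'I_k -> 'I_n} =>
            \sum_(i < k | I1 s s0 (pi i)) wt s pi i <= 2 * Stot s / s0).
Proof.
pose Pd := fun pi : {ffun 'I_k -> 'I_n} =>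
   \sum_(i < k | I1 s s0 (pi i)) wt s pi i <= 2 * Stot s / s0.
change (1 - 1 / k%:R <= \sum_(pi | Pd pi) seq_prob s pi).
have S0 := @Stot_gt0 R n s hs hn.
have sp := @sum_pr R n s hs hn.
have kpos : 0 < k%:R :> R by rewrite ltr0n.
set a := Stot s / s0.
have a0 : 0 < a by rewrite divr_gt0.
pose f := fun j : 'I_n => if I1 s s0 j then (1 / (k%:R * pr s j) : R) else (0 : R).
set m := \sum_j pr s j * f j.
pose g j := f j - m.
have g0 : \sum_j pr s j * g j = 0.
  rewrite /g; under eq_bigr do rewrite mulrBr.
  by rewrite sumrB -/m -mulr_suml sp mul1r subrr.
have km : k%:R * m <= a.
  rewrite /m mulr_sumr /a /Stot mulr_suml; apply: ler_sum => j _.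
  rewrite /f; case: ifP => hj.
    rewrite div1r mulrA mulfV; last by rewrite mulf_neq0 // gt_eqF // (@pr_gt0 R n s hs hn).
    by rewrite ler_pdivlMr // mul1r; exact: ltW.
  by rewrite !mulr0 divr_ge0 // ltW.
have hf2 : k%:R ^+ 2 * \sum_j pr s j * f j ^+ 2 <= a ^+ 2.
  have -> : a ^+ 2 = \sum_j a * (s j / s0).
    by rewrite -mulr_sumr -mulr_suml expr2.
  rewrite mulr_sumr; apply: ler_sum => j _.
  rewrite /f; case: ifP => hj.
    have sj := hs j; have pj := @pr_gt0 R n s hs hn j.
    have -> : k%:R ^+ 2 * (pr s j * (1 / (k%:R * pr s j)) ^+ 2) = Stot s / s j.
      rewrite /pr; field.
      by rewrite !gt_eqF.
    apply: (le_trans (y := a)).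
      rewrite /a ler_pM2l // lef_pV2 ?posrE //; exact: ltW.
    by apply: ler_peMr; [exact: ltW | rewrite ler_pdivlMr // mul1r; exact: ltW].
  have z : 0 <= a * (s j / s0) by rewrite mulr_ge0 ?(ltW a0) // divr_ge0 // ltW.
  by rewrite !expr2 !mulr0.
have hgf : \sum_j pr s j * g j ^+ 2 <= \sum_j pr s j * f j ^+ 2.
  have e : forall j, pr s j * g j ^+ 2 =
     pr s j * f j ^+ 2 + (- (2 * m)) * (pr s j * f j) + m ^+ 2 * pr s j.
    by move=> j; rewrite /g; ring.
  rewrite (eq_bigr _ (fun j _ => e j)) !big_split /= -!mulr_sumr sp -/m.
  nra.
have tot : \sum_(pi : {ffun 'I_k -> 'I_n}) seq_prob s pi = 1.
  rewrite /seq_prob -(bigA_distr_bigA (fun (i : 'I_k) (j : 'I_n) => pr s j)) /=.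
  by rewrite big1 // => i _; exact: sp.
have bad : \sum_(pi | ~~ Pd pi) seq_prob s pi <= 1 / k%:R.
  have psq : forall pi : {ffun 'I_k -> 'I_n}, 0 <= seq_prob s pi.
    move=> pi; apply: prodr_ge0 => i _; exact: ltW (@pr_gt0 R n s hs hn _).
  apply: (le_trans (y := \sum_(pi : {ffun 'I_k -> 'I_n})
                    seq_prob s pi * (\sum_i g (pi i)) ^+ 2 / a ^+ 2)).
    rewrite big_mkcond; apply: ler_sum => pi _; case: ifP => hP; last first.
      apply: mulr_ge0; last by rewrite invr_ge0 exprn_ge0 // ltW.
      by apply: mulr_ge0; [exact: psq | exact: sqr_ge0].
    have Xeq : \sum_(i < k | I1 s s0 (pi i)) wt s pi i = \sum_i f (pi i).
      by rewrite big_mkcond; apply: eq_bigr.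
    have Yeq : \sum_i g (pi i) = \sum_i f (pi i) - k%:R * m.
      by rewrite /g sumrB sumr_const card_ord mulr_natl.
    move: hP; rewrite /Pd Xeq -ltNge -mulrA -/a => hP.
    rewrite -mulrA; apply: ler_peMr; first exact: psq.
    rewrite ler_pdivlMr ?exprn_gt0 // mul1r Yeq.
    nra.
  rewrite -mulr_suml (@var R n k s) //.
  rewrite ler_pdivrMr ?exprn_gt0 // [1 / _ * _]mulrC mul1r ler_pdivlMr //.
  have := ler_wpM2l (ltW (exprn_gt0 2 kpos)) hgf.
  nra.
rewrite (bigID Pd) /= in tot.
lra.
Qed.
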